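(* Let $l\in\{1,\dots,n-1\}$. For $I\subseteq[1,n-1]$ set $\alpha(I)=c_{I\cap[1,l-1]}\,c_{[l,n-1]\setminus(I\cap[l,n-1])}\,\sigma_{[l,n]}\,a_l$. Then $\ell(t\alpha(I))>\ell(\alpha(I))$ if and only if $[1,l-1]\subsetneq I$.
   Context: $W_n$ is the Weyl group of type $B_n$ with Coxeter generators $t,s_1,\dots,s_{n-1}$ ($(ts_1)^4=1$, $(s_is_{i+1})^3=1$, other distinct pairs commute), $\ell$ its length function. $[i,j]=\{i,i+1,\dots,j\}$ (empty if $j<i$). Set $r_1=t$, $r_{i+1}=s_ir_i$, $a_l=r_1\cdots r_l$. For $1\le i\le j\le n$, $\sigma_{[i,j]}$ is the longest element of the subgroup generated by $s_i,\dots,s_{j-1}$. For $J=\{j_1<\dots<j_k\}\subseteq[1,n-1]$, $c_J=s_{j_1}s_{j_2}\cdots s_{j_k}$ ($c_\varnothing=1$). *)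

(* Defs.v *)
(* Model of the Weyl group W_n of type B_n as signed
   permutations of {1..n}: a point (j, b) : 'I_n * bool stands for the
   signed index (-1)^b (j+1). *)
From mathcomp Require Import all_boot.
Set Implicit Arguments. Unset Strict Implicit. Unset Printing Implicit Defensive.

Section WeylB.
Variable n : nat.

Definition eltB := {ffun 'I_n * bool -> 'I_n * bool}.

Definition mulB (f g : eltB) : eltB := [ffun x => f (g x)].
Definition oneB : eltB := [ffun x => x].
Definition prodB (s : seq eltB) : eltB := foldr mulB oneB s.

Definition tB : eltB :=
  [ffun x : 'I_n * bool => if val x.1 == 0 then (x.1, ~~ x.2) else x].

(* swap of positions i-1 and i (0-based), i.e. of 1-based i and i+1 *)
Definition swp (i : nat) (j : 'I_n) : 'I_n :=
  if val j == i.-1 then insubd j i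
  else if val j == i then insubd j i.-1 else j.

Definition sB (i : nat) : eltB := [ffun x : 'I_n * bool => (swp i x.1, x.2)].

Definition genB (i : nat) : eltB := if i == 0 then tB else sB i.

Definition wordB (P : pred nat) (k : nat) (g : eltB) : bool :=
  [exists w : k.-tuple 'I_n,
     all P (map val w) && (prodB (map (fun i : 'I_n => genB i) w) == g)].

Definition boundB : nat := #|{: eltB}|.+1.

Definition lenB (g : eltB) : nat :=
  find (fun k => wordB predT k g) (iota 0 boundB).

Definition in_parab (i j : nat) (g : eltB) : bool :=
  [exists k : 'I_boundB, wordB (fun a => (i <= a) && (a < j)) k g].

Definition sigmaB (i j : nat) : eltB :=
  [arg max_(g > oneB | in_parab i j g) lenB g].

Definition cB (J : pred nat) : eltB :=
  prodB [seq sB j | j <- iota 1 n.-1 & J j].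

Fixpoint rB (k : nat) : eltB :=
  match k with
  | 0 => oneB
  | k'.+1 => if k' is 0 then tB else mulB (sB k') (rB k')
  end.

Definition aB (l : nat) : eltB := prodB [seq rB i | i <- iota 1 l].

Definition alphaB (l : nat) (I : {set 'I_n}) : eltB :=
  let inI := fun j : nat => [exists i in I, val i == j] in
  mulB (cB (fun j => inI j && (j < l)))
    (mulB (cB (fun j => (l <= j) && ~~ inI j))
       (mulB (sigmaB l n) (aB l))).

End WeylB.

(* Main.v *)
Require Import Defs.
From mathcomp Require Import all_boot all_order all_algebra.
From mathcomp Require Import zify.
From Stdlib Require Import Classical.
Set Implicit Arguments. Unset Strict Implicit. Unset Printing Implicit Defensive.
Import Order.TTheory GRing.Theory Num.Theory.

Section Aux.
Variable n : nat.
Notation pt := ('I_n * bool)%type.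

Definition sv (z : pt) : int := if z.2 then (- Posz (val z.1).+1)%R else Posz (val z.1).+1.

Definition sact (k : nat) (z : int) : int :=
  if z == Posz k then Posz k.+1 else if z == Posz k.+1 then Posz k
  else if z == (- Posz k)%R then (- Posz k.+1)%R else if z == (- Posz k.+1)%R then (- Posz k)%R else z.

Definition tact (z : int) : int :=
  if z == 1%R then (-1)%R else if z == (-1)%R then 1%R else z.

Lemma swpE k (p : 'I_n) : 0 < k < n ->
  val (swp k p) = if val p == k.-1 then k else if val p == k then k.-1 else val p.
Proof.
move=> /andP[k0 kn]; rewrite /swp /=.
case: ifP => h1; first by rewrite val_insubd kn.
case: ifP => h2 //; by rewrite val_insubd (leq_ltn_trans (leq_pred k) kn).
Qed.

Lemma sv_sB k (x : pt) : 0 < k < n -> sv (sB n k x) = sact k (sv x).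
Proof.
move=> hk; rewrite /sv /sB ffunE /= swpE //.
case/andP: hk => k0 kn.
case: x => [[p hp] b] /=; rewrite /sact.
case: b; case: eqP => e1; try case: eqP => e2; repeat case: eqP; lia.
Qed.

Lemma sv_tB (x : pt) : sv (tB n x) = tact (sv x).
Proof.
rewrite /sv /tB ffunE /tact.
case: x => [[p hp] b] /=.
case: eqP => e /=; case: b => /=; repeat case: eqP; lia.
Qed.


Definition sperm (w : eltB n) :=
  injective w /\ forall x : pt, w (x.1, ~~ x.2) = ((w x).1, ~~ (w x).2).
Definition win (w : eltB n) (i : 'I_n) : int := sv (w (i, false)).
Definition cc (a b : int) (i j : 'I_n) : nat :=
  (((i < j) && (b < a)%R) + ((i <= j) && (a + b < 0)%R))%N.
Definition Lf (f : 'I_n -> int) : nat :=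
  \sum_(z : 'I_n * 'I_n) cc (f z.1) (f z.2) z.1 z.2.
Definition L (w : eltB n) : nat := Lf (win w).

Lemma mulBE (f g : eltB n) x : mulB f g x = f (g x).
Proof. by rewrite ffunE. Qed.

Lemma win_sB k w i : 0 < k < n -> win (mulB (sB n k) w) i = sact k (win w i).
Proof. by move=> hk; rewrite /win mulBE sv_sB. Qed.

Lemma win_tB w i : win (mulB (tB n) w) i = tact (win w i).
Proof. by rewrite /win mulBE sv_tB. Qed.

Lemma sum_delta2 (F G : 'I_n * 'I_n -> nat) u v : u != v ->
  (forall z, z != u -> z != v -> F z = G z) ->
  (\sum_z F z + G u + G v = \sum_z G z + F u + F v)%N.
Proof.
move=> uv H.
have vu : v != u by rewrite eq_sym.
have eF : (\sum_z F z = F u + (F v + \sum_(z | (z != u) && (z != v)) F z))%N.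
  by rewrite (bigD1 u) //= (bigD1 v) //=.
have eG : (\sum_z G z = G u + (G v + \sum_(z | (z != u) && (z != v)) G z))%N.
  by rewrite (bigD1 u) //= (bigD1 v) //=.
rewrite eF eG.
have -> : (\sum_(z | (z != u) && (z != v)) F z = \sum_(z | (z != u) && (z != v)) G z)%N.
  by apply: eq_bigr => z /andP[zu zv]; apply: H.
lia.
Qed.

Lemma sum_delta1 (F G : 'I_n * 'I_n -> nat) u :
  (forall z, z != u -> F z = G z) ->
  (\sum_z F z + G u = \sum_z G z + F u)%N.
Proof.
move=> H.
have eF : (\sum_z F z = F u + \sum_(z | z != u) F z)%N by rewrite (bigD1 u).
have eG : (\sum_z G z = G u + \sum_(z | z != u) G z)%N by rewrite (bigD1 u).
rewrite eF eG.
have -> : (\sum_(z | z != u) F z = \sum_(z | z != u) G z)%N.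
  by apply: eq_bigr => z zu; apply: H.
lia.
Qed.

Lemma sact_cc k a b i j : 0 < k ->
  ~ ((a = Posz k \/ a = (- Posz k)%R) /\ (b = Posz k.+1 \/ b = (- Posz k.+1)%R)) ->
  ~ ((b = Posz k \/ b = (- Posz k)%R) /\ (a = Posz k.+1 \/ a = (- Posz k.+1)%R)) ->
  cc (sact k a) (sact k b) i j = cc a b i j.
Proof.
move=> k0 h1 h2; rewrite /cc /sact.
repeat case: eqP => ?; lia.
Qed.

Lemma tact_cc a b i j : a <> 0%R -> b <> 0%R ->
  ~ ((a = 1%R \/ a = (-1)%R) /\ (b = 1%R \/ b = (-1)%R)) ->
  cc (tact a) (tact b) i j = cc a b i j.
Proof.
move=> h0 h1 h2; rewrite /cc /tact.
repeat case: eqP => ?; lia.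
Qed.


Lemma sact1 k : 0 < k -> sact k (Posz k) = Posz k.+1.
Proof. by move=> k0; rewrite /sact eqxx. Qed.
Lemma sact2 k : 0 < k -> sact k (Posz k.+1) = Posz k.
Proof. move=> k0; rewrite /sact; repeat case: eqP; lia. Qed.
Lemma sact3 k : 0 < k -> sact k (- Posz k)%R = (- Posz k.+1)%R.
Proof. move=> k0; rewrite /sact; repeat case: eqP; lia. Qed.
Lemma sact4 k : 0 < k -> sact k (- Posz k.+1)%R = (- Posz k)%R.
Proof. move=> k0; rewrite /sact; repeat case: eqP; lia. Qed.
Lemma tact1 : tact 1%R = (-1)%R.
Proof. by []. Qed.
Lemma tact2 : tact (-1)%R = 1%R.
Proof. by []. Qed.

Lemma sv_inj : injective sv.
Proof.
move=> [[p hp] b] [[q hq] c]; rewrite /sv /=.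
case: b; case: c => /= e; try lia.
- have pq : p = q by lia.
  by subst; congr (_, _); apply: val_inj.
- have pq : p = q by lia.
  by subst; congr (_, _); apply: val_inj.
Qed.

Lemma sv_val z c : sv z = Posz c.+1 \/ sv z = (- Posz c.+1)%R -> val z.1 = c.
Proof. rewrite /sv; case: z.2; lia. Qed.

Lemma sv_neq0 z : sv z <> 0%R.
Proof. rewrite /sv; case: z.2; lia. Qed.

Lemma sperm_fst w i j : sperm w -> (w (i, false)).1 = (w (j, false)).1 -> i = j.
Proof.
move=> [winj wsg] e.
case E : ((w (i,false)).2 == (w (j,false)).2).
- have : w (i, false) = w (j, false).
    by move: e (eqP E); case: (w (i,false)) => a b; case: (w (j,false)) => c d /= -> ->.
  by move/winj => [].
- have : w (j, false) = w (i, true).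
    have := wsg (i, false); rewrite /= => ->.
    move: e E; case: (w (i,false)) => a b; case: (w (j,false)) => c d /= -> .
    by case: b; case: d.
  by move/winj.
Qed.

Lemma win_x w x : sperm w -> win w x.1 = if x.2 then (- sv (w x))%R else sv (w x).
Proof.
move=> [winj wsg]; rewrite /win; case: x => p [] //=.
have := wsg (p, true); rewrite /= => ->.
by rewrite /sv /=; case: ((w (p,true)).2) => //=; rewrite opprK.
Qed.

Lemma pos_of w x i : sperm w -> (w x).2 = false ->
  win w i = Posz (val (w x).1).+1 \/ win w i = (- Posz (val (w x).1).+1)%R -> i = x.1.
Proof.
move=> sw hx /sv_val e.
apply: (sperm_fst sw).
have -> : (w (x.1, false)).1 = (w x).1.
  clear e; case: x hx => p [] //= hx.
  by case: sw => _ /(_ (p, true)) /= ->.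
by apply: val_inj.
Qed.

Lemma sv_wx (w : eltB n) x : (w x).2 = false -> sv (w x) = Posz (val (w x).1).+1.
Proof. by rewrite /sv => ->. Qed.

Lemma L_sB w x y : sperm w -> (val (w x).1 + 1 = val (w y).1)%N ->
  (w x).2 = false -> (w y).2 = false ->
  ((sv x < sv y)%R -> L (mulB (sB n (val (w y).1)) w) = (L w + 1)%N) /\
  ((sv y < sv x)%R -> (L (mulB (sB n (val (w y).1)) w) + 1)%N = L w).
Proof.
move=> sw hxy hx hy.
set k := val (w y).1.
have k0 : 0 < k by rewrite /k -hxy addn1.
have kn : k < n by exact: ltn_ord.
have hk : 0 < k < n by rewrite k0 kn.
have wp : win w x.1 = if x.2 then (- Posz k)%R else Posz k.
  by rewrite (win_x _ sw) sv_wx // /k -hxy addn1.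
have wq : win w y.1 = if y.2 then (- Posz k.+1)%R else Posz k.+1.
  by rewrite (win_x _ sw) sv_wx.
have pq : x.1 != y.1.
  apply/eqP => e; move: wp; rewrite e wq.
  case: (x.2); case: (y.2); lia.
have eL : L (mulB (sB n k) w) = Lf (fun i => sact k (win w i)).
  by apply: eq_bigr => z _; rewrite !win_sB.
have D := @sum_delta2 (fun z => cc (sact k (win w z.1)) (sact k (win w z.2)) z.1 z.2)
  (fun z => cc (win w z.1) (win w z.2) z.1 z.2) (x.1, y.1) (y.1, x.1).
have uv : (x.1, y.1) != (y.1, x.1).
  by apply/eqP => -[e _]; move/eqP: pq.
have {D uv}D := D uv.
have hx' : (val (w x).1).+1 = k by rewrite /k -hxy addn1.
have hy' : (val (w y).1).+1 = k.+1 by [].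
lapply D; last first.
  move=> [i j] /= hu hv; apply: sact_cc => //.
  - move=> [ha hb].
    have ei : i = x.1 by apply: (pos_of sw hx); rewrite hx'.
    have ej : j = y.1 by apply: (pos_of sw hy); rewrite hy'.
    by move: hu; rewrite ei ej eqxx.
  - move=> [hb ha].
    have ei : i = y.1 by apply: (pos_of sw hy); rewrite hy'.
    have ej : j = x.1 by apply: (pos_of sw hx); rewrite hx'.
    by move: hv; rewrite ei ej eqxx.
move=> {}D.
change (Lf (fun i => sact k (win w i)) + cc (win w x.1) (win w y.1) x.1 y.1
   + cc (win w y.1) (win w x.1) y.1 x.1 = Lf (win w) +
   cc (sact k (win w x.1)) (sact k (win w y.1)) x.1 y.1 +
   cc (sact k (win w y.1)) (sact k (win w x.1)) y.1 x.1)%N in D.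
rewrite eL /L; move: D.
generalize (Lf (fun i => sact k (win w i))) (Lf (win w)) => A B.
rewrite wp wq.
have svx : sv x = if x.2 then (- Posz (nat_of_ord x.1).+1)%R else Posz (nat_of_ord x.1).+1 by [].
have svy : sv y = if y.2 then (- Posz (nat_of_ord y.1).+1)%R else Posz (nat_of_ord y.1).+1 by [].
rewrite svx svy.
have pq' : nat_of_ord x.1 != nat_of_ord y.1 by [].
case: (x.2); case: (y.2);
  rewrite ?sact1 ?sact2 ?sact3 ?sact4 // /cc => D; split => H; lia.
Qed.


Lemma L_tB w x : sperm w -> val (w x).1 = 0 -> (w x).2 = false ->
  (x.2 = false -> L (mulB (tB n) w) = (L w + 1)%N) /\
  (x.2 = true -> (L (mulB (tB n) w) + 1)%N = L w).
Proof.
move=> sw h0 hx.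
have wp : win w x.1 = if x.2 then (-1)%R else 1%R.
  by rewrite (win_x _ sw) sv_wx // h0.
have eL : L (mulB (tB n) w) = Lf (fun i => tact (win w i)).
  by apply: eq_bigr => z _; rewrite !win_tB.
have D := @sum_delta1 (fun z => cc (tact (win w z.1)) (tact (win w z.2)) z.1 z.2)
  (fun z => cc (win w z.1) (win w z.2) z.1 z.2) (x.1, x.1).
have h1 : (val (w x).1).+1 = 1%N by rewrite h0.
lapply D; last first.
  move=> [i j] /= hu; apply: tact_cc; try exact: sv_neq0.
  move=> [ha hb].
  have ei : i = x.1 by apply: (pos_of sw hx); rewrite h1.
  have ej : j = x.1 by apply: (pos_of sw hx); rewrite h1.
  by move: hu; rewrite ei ej eqxx.
move=> {}D.
change (Lf (fun i => tact (win w i)) + cc (win w x.1) (win w x.1) x.1 x.1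
   = Lf (win w) + cc (tact (win w x.1)) (tact (win w x.1)) x.1 x.1)%N in D.
rewrite eL /L; move: D.
generalize (Lf (fun i => tact (win w i))) (Lf (win w)) => A B.
rewrite wp.
case: (x.2) => /=; rewrite ?tact1 ?tact2 /cc ltnn leqnn /= => D; split => H; lia.
Qed.


Lemma sperm_mul f g : sperm f -> sperm g -> sperm (mulB f g).
Proof.
move=> [fi fs] [gi gs]; split.
  by move=> a b; rewrite !mulBE => /fi /gi.
by move=> x; rewrite !mulBE gs fs.
Qed.

Lemma sperm_one : sperm (oneB n).
Proof. by split; [move=> a b; rewrite !ffunE | move=> x; rewrite !ffunE]. Qed.

Lemma sperm_invol (g : eltB n) : (forall x, g (g x) = x) ->
  (forall x : pt, g (x.1, ~~ x.2) = ((g x).1, ~~ (g x).2)) -> sperm g.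
Proof. by move=> gg gs; split => //; apply: (can_inj gg). Qed.

Lemma pt_eq (x y : pt) : val x.1 = val y.1 -> x.2 = y.2 -> x = y.
Proof. by case: x y => [a b] [c d] /= /val_inj -> ->. Qed.

Lemma sB_invol k x : 0 < k < n -> sB n k (sB n k x) = x.
Proof.
move=> hk; rewrite /sB !ffunE /=; apply: pt_eq => //=.
rewrite !swpE //; case/andP: hk => k0 kn.
repeat case: eqP => /=; lia.
Qed.

Lemma tB_invol x : tB n (tB n x) = x.
Proof.
rewrite /tB !ffunE; case: x => [p b] /=.
case: (boolP (val p == 0)) => e; first by rewrite /= e /= negbK.
by rewrite /= (negbTE e).
Qed.

Lemma sperm_sB k : 0 < k < n -> sperm (sB n k).
Proof. by move=> hk; apply: sperm_invol => [x|x]; [apply: sB_invol | rewrite !ffunE]. Qed.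

Lemma sperm_tB : sperm (tB n).
Proof.
apply: sperm_invol => [x|x]; first exact: tB_invol.
by rewrite !ffunE /=; case: ifP.
Qed.

Lemma gen_cases (i : 'I_n) : (val i = 0 /\ genB n i = tB n) \/ (0 < val i < n /\ genB n i = sB n i).
Proof.
rewrite /genB; case: eqP => e; [by left | right].
by split => //; rewrite ltn_ord andbT lt0n; apply/eqP.
Qed.

Lemma sperm_gen (i : 'I_n) : sperm (genB n i).
Proof.
case: (gen_cases i) => [[_ ->]|[h ->]]; [exact: sperm_tB | exact: sperm_sB].
Qed.

Lemma gen_invol (i : 'I_n) x : genB n i (genB n i x) = x.
Proof.
case: (gen_cases i) => [[_ ->]|[h ->]]; [exact: tB_invol | exact: sB_invol].
Qed.

Lemma sperm_prod (s : seq (eltB n)) : (forall g, g \in s -> sperm g) -> sperm (prodB s).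
Proof.
elim: s => [|g s IH] /= H; first exact: sperm_one.
apply: sperm_mul; first by apply: H; rewrite inE eqxx.
by apply: IH => h hs; apply: H; rewrite inE hs orbT.
Qed.

Lemma sperm_word (s : seq 'I_n) : sperm (prodB (map (fun i : 'I_n => genB n i) s)).
Proof.
by apply: sperm_prod => g /mapP [i _ ->]; exact: sperm_gen.
Qed.

Lemma sperm_surj w y : sperm w -> exists x, w x = y.
Proof.
move=> [wi _]; have [h hK Kh] := injF_bij wi.
by exists (h y); rewrite Kh.
Qed.



Lemma sv_neq (x y : pt) : x != y -> sv x <> sv y.
Proof. by move=> xy /sv_inj e; move: xy; rewrite e eqxx. Qed.

Lemma L_gen_le w (i : 'I_n) : sperm w -> (L (mulB (genB n i) w) <= L w + 1)%N.
Proof.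
move=> sw; case: (gen_cases i) => [[i0 ->]|[hi ->]].
- have [x hx] := sperm_surj (i, false) sw.
  have := L_tB (x := x) sw; rewrite hx => /(_ i0 erefl) [h1 h2].
  case: (boolP x.2) => b; first by move: (h2 b); lia.
  by rewrite h1 ?(negbTE b).
- case/andP: hi => i0 iN.
  have jn : (i.-1 < n)%N by rewrite (leq_ltn_trans (leq_pred _)).
  have [x hx] := sperm_surj (Ordinal jn, false) sw.
  have [y hy] := sperm_surj (i, false) sw.
  have e1 : (val (Ordinal jn) + 1 = val i)%N by rewrite /= addn1 prednK.
  have := L_sB sw (x := x) (y := y); rewrite hx hy /=.
  move=> /(_ e1 erefl erefl) [h1 h2].
  have xy : x != y.
    have i0' : (0 < nat_of_ord i)%N by exact: i0.
    apply/eqP => e; move: hx; rewrite e hy => -[] /(congr1 (@nat_of_ord n)) /=; lia.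
  have := sv_neq xy => nxy.
  case: (ltrgtP (sv x) (sv y)) => c; first by rewrite h1.
  - by move: (h2 c); lia.
  - by [].
Qed.

Lemma L_one : L (oneB n) = 0.
Proof.
rewrite /L /Lf big1 // => z _.
rewrite /cc /win /sv !ffunE /=; lia.
Qed.

Lemma L_word (s : seq 'I_n) : (L (prodB (map (fun i : 'I_n => genB n i) s)) <= size s)%N.
Proof.
elim: s => [|i s IH] /=; first by rewrite L_one.
apply: leq_trans (L_gen_le i (sperm_word s)) _; lia.
Qed.

Lemma L_bound w : (L w < boundB n)%N.
Proof.
have h1 : (L w <= #|{: 'I_n * 'I_n}| * 2)%N.
  rewrite /L /Lf -sum_nat_const; apply: leq_sum => z _; rewrite /cc.
  by case: (_ && _); case: (_ && _).
rewrite card_prod card_ord in h1.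
rewrite /boundB card_ffun card_prod card_ord card_bool ltnS.
apply: (leq_trans h1).
case: n => [|m] //.
have e : (m.+1 * m.+1 * 2 <= (m.+1 * 2) ^ 2)%N by rewrite expnS expn1; nia.
apply: (leq_trans e); apply: leq_pexp2l => //; lia.
Qed.

Lemma word_seq P k g : wordB P k g ->
  exists s : seq 'I_n, [/\ size s = k, all P (map val s) & prodB (map (fun i : 'I_n => genB n i) s) = g].
Proof.
case/existsP => t /andP[ha /eqP hp].
by exists (tval t); rewrite size_tuple.
Qed.

Lemma seq_word P (s : seq 'I_n) g : all P (map val s) ->
  prodB (map (fun i : 'I_n => genB n i) s) = g -> wordB P (size s) g.
Proof.
move=> ha hp; apply/existsP; exists (in_tuple s); by rewrite /= ha hp eqxx.
Qed.

Lemma lenB_ge g : (L g <= lenB g)%N.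
Proof.
rewrite /lenB.
set a := fun k => wordB predT k g.
case: (ltnP (find a (iota 0 (boundB n))) (size (iota 0 (boundB n)))) => h.
- have := nth_find 0 (a := a) (s := iota 0 (boundB n)); rewrite has_find => /(_ h).
  rewrite nth_iota ?size_iota -?has_find //; last by rewrite size_iota in h.
  rewrite add0n => /word_seq [s [hs _ <-]]; rewrite -hs; exact: L_word.
- rewrite size_iota in h; apply: leq_trans h; exact: ltnW (L_bound g).
Qed.

Lemma lenB_le_word (s : seq 'I_n) g : (size s < boundB n)%N ->
  prodB (map (fun i : 'I_n => genB n i) s) = g -> (lenB g <= size s)%N.
Proof.
move=> hs hp; rewrite /lenB; rewrite leqNgt; apply/negP => h.
have := before_find 0 h; rewrite nth_iota // add0n.
by rewrite (@seq_word predT s g) //; apply/allP.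
Qed.



Lemma nodesc w : sperm w ->
  (forall x, val (w x).1 = 0 -> (w x).2 = false -> x.2 = false) ->
  (forall x y, (val (w x).1 + 1 = val (w y).1)%N -> (w x).2 = false -> (w y).2 = false ->
     (sv x < sv y)%R) ->
  w = oneB n.
Proof.
move=> sw H0 Hk.
have svle x : (sv x <= Posz (val x.1).+1)%R by rewrite /sv; case: (x.2); lia.
have lo : forall a x, (a < n)%N -> val (w x).1 = a -> (w x).2 = false -> (Posz a.+1 <= sv x)%R.
  elim=> [|a IH] x an hxa hx2.
  - by have := H0 x hxa hx2; rewrite /sv => ->.
  - have an' : (a < n)%N by lia.
    have [x' hx'] := sperm_surj (Ordinal an', false) sw.
    have := IH x' an'; rewrite hx' => /(_ erefl erefl) h1.
    have := Hk x' x; rewrite hx' hxa => /(_ ltac:(by rewrite /= addn1) erefl hx2) h2.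
    lia.
have hi : forall d a x, (a < n)%N -> (a + d = n.-1)%N -> val (w x).1 = a -> (w x).2 = false ->
    (sv x <= Posz a.+1)%R.
  elim=> [|d IH] a x an had hxa hx2.
  - rewrite /sv; case: x hxa hx2 => [[p hp] b] /= _ _; case: b; lia.
  - have an' : (a.+1 < n)%N by lia.
    have [y hy] := sperm_surj (Ordinal an', false) sw.
    have := IH a.+1 y an'; rewrite hy => /(_ ltac:(lia) erefl erefl) h1.
    have := Hk x y; rewrite hy hxa => /(_ ltac:(by rewrite /= addn1) hx2 erefl) h2.
    lia.
have fix1 : forall j : 'I_n, w (j, false) = (j, false).
  move=> [j jn].
  have [x hx] := sperm_surj (Ordinal jn, false) sw.
  have h1 := lo j x jn; rewrite hx /= in h1.
  have h2 := hi (n.-1 - j) j x jn; rewrite hx /= in h2.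
  have e : sv x = sv (Ordinal jn, false).
    have := h1 erefl erefl; have := h2 ltac:(lia) erefl erefl; rewrite /sv /=; lia.
  by have ex := sv_inj e; rewrite -ex hx ex.
apply/ffunP => -[j b]; rewrite ffunE; case: b; last exact: fix1.
by case: sw => _ /(_ (j, false)) /=; rewrite fix1.
Qed.

Lemma desc w : sperm w -> w <> oneB n ->
  (exists x, [/\ val (w x).1 = 0, (w x).2 = false & x.2 = true]) \/
  (exists x y, [/\ (val (w x).1 + 1 = val (w y).1)%N, (w x).2 = false, (w y).2 = false &
     (sv y < sv x)%R]).
Proof.
move=> sw w1.
apply: NNPP => Hn; apply: w1; apply: nodesc => //.
- move=> x h0 h2; apply: negbTE; apply/negP => h; apply: Hn; left; by exists x.
- move=> x y h1 h2 h3.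
  have xy : x != y.
    apply/eqP => e; move: h1; rewrite e; lia.
  case: (ltrgtP (sv x) (sv y)) => // c.
  + exfalso; apply: Hn; right; by exists x, y.
  + by exfalso; apply: (sv_neq xy).
Qed.

Lemma prod_cons (i : 'I_n) (s : seq 'I_n) :
  prodB (map (fun i : 'I_n => genB n i) (i :: s)) = mulB (genB n i) (prodB (map (fun i : 'I_n => genB n i) s)).
Proof. by []. Qed.

Lemma gen_cancel (i : 'I_n) w : mulB (genB n i) (mulB (genB n i) w) = w.
Proof. by apply/ffunP => x; rewrite !mulBE gen_invol. Qed.

Lemma build (P : pred nat) (C : eltB n -> Prop) :
  (forall w, sperm w -> C w -> w <> oneB n -> exists i : 'I_n,
     [/\ P i, (L (mulB (genB n i) w) < L w)%N & C (mulB (genB n i) w)]) ->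
  forall w, sperm w -> C w -> exists s : seq 'I_n,
    [/\ all P (map val s), prodB (map (fun i : 'I_n => genB n i) s) = w & (size s <= L w)%N].
Proof.
move=> H.
suff: forall m w, (L w < m)%N -> sperm w -> C w -> exists s : seq 'I_n,
    [/\ all P (map val s), prodB (map (fun i : 'I_n => genB n i) s) = w & (size s <= L w)%N].
  by move=> h w; apply: h (ltnSn _).
elim=> [|m IH] w // hm sw cw.
case: (classic (w = oneB n)) => [->|w1]; first by exists [::].
have [i [pi hl ci]] := H w sw cw w1.
have := IH (mulB (genB n i) w) ltac:(lia) (sperm_mul (sperm_gen i) sw) ci.
move=> [s [ha hp hs]].
exists (i :: s); split => /=.
- by rewrite pi ha.
- by rewrite hp gen_cancel.
- lia.
Qed.

Lemma lenB_le w : sperm w -> (lenB w <= L w)%N.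
Proof.
move=> sw.
have HH : exists s : seq 'I_n,
    [/\ all predT (map val s), prodB (map (fun i : 'I_n => genB n i) s) = w & (size s <= L w)%N].
  apply: (build (C := fun _ => True)) => // v sv' _ v1.
  case: (desc sv' v1) => [[x [h0 h2 hx]] | [x [y [h1 h2 h3 h4]]]].
  - exists (v x).1; split => //.
    have := L_tB (x := x) sv' h0 h2 => -[_ /(_ hx)].
    case: (gen_cases (v x).1) => [[_ ->]|[hh _]]; first lia.
    by move: hh; rewrite h0.
  - exists (v y).1; split => //.
    have := L_sB (x := x) (y := y) sv' h1 h2 h3 => -[_ /(_ h4)].
    case: (gen_cases (v y).1) => [[hh _]|[_ ->]]; last first.
      by move=> hh; rewrite -hh addn1 ltnS leqnn.
    by move: h1; rewrite hh; lia.
case: HH => s [_ hp hs].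
apply: (leq_trans _ hs); apply: lenB_le_word hp.
exact: leq_ltn_trans hs (L_bound w).
Qed.



Definition Cp (l : nat) (w : eltB n) :=
  forall x : pt, (w x).2 = x.2 /\ ((val x.1 < l.-1)%N -> w x = x).

Lemma sB_fix k (x : pt) : val x.1 != k.-1 -> val x.1 != k -> sB n k x = x.
Proof.
rewrite /sB ffunE /swp => h1 h2.
by rewrite (negbTE h1) (negbTE h2); case: x {h1 h2}.
Qed.

Lemma Cp_mul l (k : 'I_n) w : (0 < l)%N -> (l <= k)%N -> Cp l w -> Cp l (mulB (genB n k) w).
Proof.
move=> l0 lk cw.
have k0 : (0 < val k)%N by apply: leq_trans lk.
case: (gen_cases k) => [[e _]|[hk ->]]; first by move: k0; rewrite e.
move=> x; rewrite mulBE; case: (cw x) => h1 h2; split.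
  by rewrite /sB ffunE /= h1.
move=> hx; rewrite h2 // sB_fix //; apply/eqP; lia.
Qed.

Lemma Cp_one l : Cp l (oneB n).
Proof. by move=> x; rewrite ffunE. Qed.

Lemma parab_desc l w : (0 < l)%N -> sperm w -> Cp l w -> w <> oneB n ->
  exists i : 'I_n, [/\ (fun a => (l <= a) && (a < n))%N (val i),
     (L (mulB (genB n i) w) < L w)%N & Cp l (mulB (genB n i) w)].
Proof.
move=> l0 sw cw w1.
case: (desc sw w1) => [[x [h0 h2 hx]] | [x [y [h1 h2 h3 h4]]]].
  by case: (cw x) => e _; move: e; rewrite h2 hx.
have lk : (l <= val (w y).1)%N.
  rewrite leqNgt; apply/negP => kl.
  have ha : (val (w x).1 < l.-1)%N by lia.
  have ex : x = ((w x).1, false).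
    apply: (proj1 sw); case: (cw ((w x).1, false)) => _ -> //=.
    by case: (w x) h2 => a b /= ->.
  have svx : sv x = Posz (val (w x).1).+1 by rewrite {1}ex.
  have y2 : y.2 = false by case: (cw y) => e _; rewrite -e.
  have svy : (Posz (val (w y).1).+1 <= sv y)%R.
    case: (ltnP (val y.1) l.-1) => hy.
      case: (cw y) => _ /(_ hy) ->; rewrite /sv y2; lia.
    rewrite /sv y2 /= lez_nat ltnS; apply: leq_trans hy; rewrite -ltnS prednK //.
  move: h4; rewrite svx; lia.
exists (w y).1; split.
- by rewrite lk ltn_ord.
- case: (gen_cases (w y).1) => [[hh _]|[_ ->]].
    by move: h1; rewrite hh; lia.
  have := L_sB (x := x) (y := y) sw h1 h2 h3 => -[_ /(_ h4)].
  by move=> hh; rewrite -hh addn1 ltnS leqnn.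
- exact: Cp_mul.
Qed.

Lemma parab_word l w : (0 < l)%N -> sperm w -> Cp l w -> in_parab l n w.
Proof.
move=> l0 sw cw.
have [s [ha hp hs]] := build (@parab_desc l^~ l0) sw cw.
have sb : (size s < boundB n)%N by apply: leq_ltn_trans hs (L_bound w).
apply/existsP; exists (Ordinal sb); exact: seq_word.
Qed.

Lemma parab_inv l w : (0 < l)%N -> in_parab l n w -> sperm w /\ Cp l w.
Proof.
move=> l0 /existsP [k /word_seq [s [_ ha <-]]]; split; first exact: sperm_word.
elim: s ha => [|i s IH] /=; first by move=> _; exact: Cp_one.
case/andP => /andP [li _] ha; apply: Cp_mul => //; exact: IH.
Qed.



Lemma sigma_spec l : (0 < l)%N -> (l <= n.-1)%N ->
  [/\ sperm (sigmaB n l n), Cp l (sigmaB n l n) &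
      forall x : pt, val x.1 = l.-1 -> val (sigmaB n l n x).1 = n.-1].
Proof.
move=> l0 ln.
have p1 : in_parab l n (oneB n) by apply: parab_word => //; [exact: sperm_one | exact: Cp_one].
rewrite /sigmaB; case: (arg_maxnP (fun g => lenB g) p1) => s hs hmax.
have [ss cs] := parab_inv l0 hs.
have n0 : (0 < n)%N by move: ln l0; case: (n) => //=; case: (l).
have hl : (l.-1 < n)%N by lia.
set x0 : pt := (Ordinal hl, false).
suff main : val (s x0).1 = n.-1.
  split => // -[p b] /= hp.
  have ep : p = Ordinal hl by apply: val_inj.
  subst p; case: b; last exact: main.
  by case: ss => _ /(_ x0) /= ->.
have z2 : (s x0).2 = false by case: (cs x0).
have vge : (l.-1 <= val (s x0).1)%N.
  rewrite leqNgt; apply/negP => hv.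
  have : s ((s x0).1, false) = s x0.
    case: (cs ((s x0).1, false)) => _ -> //.
    by move: z2; case: (s x0) => a b /= ->.
  move/(proj1 ss)/(congr1 (fun z : pt => val z.1)) => /= e.
  by move: hv; rewrite ltnNge; move/negP; apply; rewrite -e.
have vle : (val (s x0).1 < n)%N by exact: ltn_ord.
case: (ltnP (val (s x0).1) n.-1) => hv; last lia.
exfalso.
have vn : ((val (s x0).1).+1 < n)%N by lia.
have [y hy] := sperm_surj (Ordinal vn, false) ss.
have h1 : (val (s x0).1 + 1 = val (s y).1)%N by rewrite hy /= addn1.
have h3 : (s y).2 = false by rewrite hy.
have y2 : y.2 = false by case: (cs y) => e _; rewrite -e h3.
have xy : x0 != y.
  by apply/eqP => e; move: h1; rewrite -e; lia.
have yge : (l <= val y.1)%N.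
  case: (ltnP (val y.1) l.-1) => hy1.
    case: (cs y) => _ /(_ hy1) e; move: h1; rewrite e; lia.
  case: (ltngtP (val y.1) l.-1) => hy2; first lia.
  - by rewrite -(prednK l0).
  - exfalso; move/eqP: xy; apply; apply: pt_eq => //=; by rewrite y2.
have svlt : (sv x0 < sv y)%R.
  rewrite /sv y2 /= ltz_nat ltnS prednK //.
have [hL _] := L_sB (x := x0) (y := y) ss h1 z2 h3.
have {}hL := hL svlt.
have k0 : (0 < val (s y).1)%N by lia.
have gk : genB n (s y).1 = sB n (val (s y).1).
  by case: (gen_cases (s y).1) => [[e _]|[_ ->]] //; move: k0; rewrite e.
have ck : Cp l (mulB (genB n (s y).1) s).
  apply: Cp_mul => //; apply: (leq_trans _ (eq_leq h1)); lia.
have sk : sperm (mulB (genB n (s y).1) s) by apply: sperm_mul => //; exact: sperm_gen.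
have pk := parab_word l0 sk ck.
have := hmax _ pk; rewrite gk.
have := lenB_ge (mulB (sB n (val (s y).1)) s).
have := lenB_le ss.
rewrite hL => a b c.
have := leq_trans b c; lia.
Qed.



Lemma prodB_pt (s : seq (eltB n)) x : prodB s x = foldr (fun (g : eltB n) y => g y) x s.
Proof. by elim: s => [|g s IH] /=; rewrite ffunE // IH. Qed.

Lemma prodB_cat (s1 s2 : seq (eltB n)) x : prodB (s1 ++ s2) x = prodB s1 (prodB s2 x).
Proof. by rewrite !prodB_pt foldr_cat. Qed.

Lemma rB_spec k x : (0 < k <= n)%N ->
  val (rB n k x).1 = (if val x.1 == 0 then k.-1 else if (val x.1 < k)%N then (val x.1).-1 else val x.1)
  /\ (rB n k x).2 = (if val x.1 == 0 then ~~ x.2 else x.2).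
Proof.
elim: k => [|k IH] // /andP[_ kn].
case: k IH kn => [|k] IH kn.
  clear IH; rewrite /= /tB ffunE; case: x => [[p hp] b] /=.
  by case: p hp => [|p] hp.
have := IH ltac:(lia) => -[h1 h2].
rewrite /= mulBE /sB ffunE /= swpE; last lia.
split => //.
rewrite h1; clear IH; case: x {h1 h2} => [[p hp] b] /=.
case: p hp => [|p] hp /=; first by rewrite eqxx.
case: (ltnP p.+1 k.+1) => h1; case: (ltnP p.+1 k.+2) => h2 /=; do 2?case: eqP => ?; lia.
Qed.

Lemma aB_spec l x : (l <= n)%N ->
  val (aB n l x).1 = (if (val x.1 < l)%N then l.-1 - val x.1 else val x.1)
  /\ (aB n l x).2 = (if (val x.1 < l)%N then ~~ x.2 else x.2).
Proof.
elim: l x => [|l IH] x ln.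
  by rewrite /aB /= ffunE.
have e : aB n l.+1 = prodB ([seq rB n i | i <- iota 1 l] ++ [:: rB n l.+1]).
  by rewrite /aB -[l.+1]addn1 iotaD map_cat /= ?add1n ?addn1.
have e2 : aB n l.+1 x = aB n l (rB n l.+1 x) by rewrite e prodB_cat /= !ffunE.
rewrite e2.
have [r1 r2] := @rB_spec l.+1 x ltac:(lia).
have [a1 a2] := IH (rB n l.+1 x) ltac:(lia).
rewrite a1 a2 r1 r2.
clear e e2 IH; case: x {r1 r2 a1 a2} => [[p hp] b] /=.
case: (eqVneq p 0) => [->|p0] /=.
  rewrite ltnn /=; split => //; lia.
case: (ltnP p l.+1) => pl.
  have -> : (p.-1 < l)%N by lia.
  split; [lia | by []].
have -> : (p < l)%N = false by lia.
by [].
Qed.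

Lemma sB_sign k x : (sB n k x).2 = x.2.
Proof. by rewrite ffunE. Qed.

Lemma prod_sB_sign (s : seq nat) x : (prodB [seq sB n j | j <- s] x).2 = x.2.
Proof. elim: s => [|j s IH] /=; first by rewrite ffunE. by rewrite mulBE sB_sign. Qed.

Lemma prod_sB_fix (s : seq nat) p x : (forall j, j \in s -> p.+2 <= j)%N -> val x.1 = p ->
  prodB [seq sB n j | j <- s] x = x.
Proof.
elim: s => [|j s IH] hs hx /=; first by rewrite ffunE.
rewrite ffunE IH; last by [] ; last by move=> i hi; apply: hs; rewrite inE hi orbT.
have := hs j (mem_head _ _) => hj.
clear IH; move: hx; case: x => [[q hq] b] /= hx.
apply: sB_fix => /=; apply/eqP; lia.
Qed.

Lemma prod_sB_chain a k x : (0 < a)%N -> (a + k <= n)%N -> val x.1 = (a + k).-1 ->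
  val (prodB [seq sB n j | j <- iota a k] x).1 = a.-1.
Proof.
elim: k x => [|k IH] x a0 akn hx.
  by rewrite /= ffunE hx addn0.
have e : iota a k.+1 = iota a k ++ [:: a + k] by rewrite -addn1 iotaD.
rewrite e map_cat prodB_cat /= ffunE ffunE /=.
apply: IH; [done | lia |].
move: hx; case: x => [[q hq] b] /= hx.
rewrite ffunE swpE /=; last lia.
do 2?case: eqP => ?; lia.
Qed.



Lemma cB_chain (J : pred nat) a k x : (0 < a)%N -> (a + k <= n)%N ->
  (forall j, (0 < j < a)%N -> ~~ J j) -> (forall j, (a <= j < a + k)%N -> J j) ->
  ((a + k < n)%N -> ~~ J (a + k)) -> val x.1 = (a + k).-1 ->
  val (cB n J x).1 = a.-1 /\ (cB n J x).2 = x.2.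
Proof.
move=> a0 akn hJ1 hJ2 hJ3 hx.
split; last by rewrite /cB prod_sB_sign.
have e : iota 1 n.-1 = iota 1 a.-1 ++ iota a k ++ iota (a + k) (n - (a + k)).
  have h1 : n.-1 = a.-1 + (k + (n - (a + k))) by lia.
  by rewrite h1 iotaD iotaD add1n prednK.
rewrite /cB e !filter_cat.
have -> : [seq j <- iota 1 a.-1 | J j] = [::].
  rewrite (@eq_in_filter _ _ pred0) ?filter_pred0 // => j; rewrite mem_iota => hj.
  apply/negbTE; apply: hJ1; lia.
have -> : [seq j <- iota a k | J j] = iota a k.
  by apply/all_filterP; apply/allP => j; rewrite mem_iota => hj; apply: hJ2.
rewrite /= map_cat prodB_cat.
have -> : prodB [seq sB n j | j <- iota (a + k) (n - (a + k)) & J j] x = x.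
  apply: (@prod_sB_fix _ (a + k).-1) => // j.
  rewrite mem_filter mem_iota => /andP [hj /andP [h1 h2]].
  case: (eqVneq j (a + k)) => [ej|nej]; last lia.
  by move: hj; rewrite ej; move/negP: (hJ3 ltac:(lia)).
exact: prod_sB_chain.
Qed.



Definition inI (I : {set 'I_n}) (j : nat) := [exists i in I, val i == j].

Lemma alpha_eq l (I : {set 'I_n}) : alphaB l I =
  mulB (cB n (fun j => inI I j && (j < l)%N))
    (mulB (cB n (fun j => (l <= j)%N && ~~ inI I j)) (mulB (sigmaB n l n) (aB n l))).
Proof. by []. Qed.

Lemma c1_spec l (I : {set 'I_n}) m y : (0 < m <= l)%N -> (l < n)%N ->
  (forall j, (0 < j < m)%N -> inI I j) -> ((m < l)%N -> ~~ inI I m) -> val y.1 = m.-1 ->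
  val (cB n (fun j => inI I j && (j < l)%N) y).1 = 0 /\
  (cB n (fun j => inI I j && (j < l)%N) y).2 = y.2.
Proof.
move=> hm ln h1 h2 hy.
have := @cB_chain (fun j => inI I j && (j < l)%N) 1 m.-1 y isT ltac:(lia).
apply => //.
- move=> j hj; lia.
- move=> j hj /=; rewrite h1 /=; lia.
- move=> hmn /=; rewrite add1n prednK; last lia.
  case: (ltnP m l) => hml; first by rewrite (negbTE (h2 hml)).
  by rewrite andbF.
Qed.



Lemma inI_lt (I : {set 'I_n}) j : (forall i : 'I_n, i \in I -> 0 < val i)%N ->
  inI I j -> (0 < j < n)%N.
Proof.
move=> Ip /existsP [i /andP [hi /eqP <-]].
by rewrite Ip // ltn_ord.
Qed.

Lemma condE l (I : {set 'I_n}) : (l < n)%N -> (forall i : 'I_n, i \in I -> 0 < val i)%N ->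
  ([set i : 'I_n | 0 < val i < l] \proper I)%N <->
  (forall j, (0 < j < l)%N -> inI I j) /\ (exists j, (l <= j)%N /\ inI I j).
Proof.
move=> ln Ip; split.
- case/properP => /subsetP hsub [i hi hni]; split.
  + move=> j hj.
    have jn : (j < n)%N by lia.
    apply/existsP; exists (Ordinal jn); rewrite hsub ?eqxx //.
    by rewrite inE /=.
  + exists (val i); split; last by apply/existsP; exists i; rewrite hi eqxx.
    by move: hni; rewrite inE Ip //= -leqNgt.
- move=> [hall [j [lj hj]]]; apply/properP; split.
  + apply/subsetP => i; rewrite inE => hi.
    have := hall _ hi => /existsP [i' /andP [hi' /eqP e]].
    by rewrite -(val_inj e).
  + case/existsP: hj => i /andP [hi /eqP e]; exists i => //.
    rewrite inE; apply/negP => /andP [_ h]; move: h; rewrite ltnNge => /negP; apply.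
    exact: (leq_trans lj (eq_leq (esym e))).
Qed.



Lemma cB2_fix l (I : {set 'I_n}) y : (val y.1).+2 <= l ->
  cB n (fun j => (l <= j)%N && ~~ inI I j) y = y.
Proof.
move=> hy; rewrite /cB; apply: (@prod_sB_fix _ (val y.1)) => // j.
rewrite mem_filter => /andP [/andP [lj _] _]; lia.
Qed.

Lemma alpha_key l (I : {set 'I_n}) : (0 < l)%N -> (l <= n.-1)%N ->
  (forall i : 'I_n, i \in I -> 0 < val i)%N ->
  exists x : pt, [/\ val (alphaB l I x).1 = 0, (alphaB l I x).2 = false &
     (x.2 = false <-> [set i : 'I_n | 0 < val i < l] \proper I)].
Proof.
move=> l0 ln Ip.
have ln' : (l < n)%N by lia.
have [ss cs hs] := sigma_spec l0 ln.
have aE : forall x, alphaB l I x = cB n (fun j => inI I j && (j < l)%N)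
    (cB n (fun j => (l <= j)%N && ~~ inI I j) (sigmaB n l n (aB n l x))).
  by move=> x; rewrite alpha_eq !mulBE.
have cE := condE ln' Ip.
case: (classic (forall j, (0 < j < l)%N -> inI I j)) => hall; last first.
  have hexA : exists j, (0 < j)%N && ~~ inI I j.
    apply: NNPP => hn; apply: hall => j hj; apply: NNPP => hj'.
    by apply: hn; exists j; rewrite (_ : (0 < j)%N = true) /=; [apply/negP | lia].
  case: (ex_minnP hexA) => m /andP [m0 nm] mmin.
  have ml : (m < l)%N.
    apply: NNPP => hml; apply: hall => j hj; apply: NNPP => hj'.
    have : (m <= j)%N by apply: mmin; rewrite (_ : (0 < j)%N = true) /=; [apply/negP | lia].
    lia.
  have lmn : (l - m < n)%N by lia.
  exists (Ordinal lmn, true).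
  have [a1 a2] := @aB_spec l (Ordinal lmn, true) (ltnW ln').
  move: a1 a2; rewrite /= (_ : (l - m < l)%N = true); last lia.
  move=> a1 a2.
  rewrite aE; move: a1 a2; generalize (aB n l (Ordinal lmn, true)) => z a1 a2.
  have {}a1 : val z.1 = m.-1 by rewrite /= a1; lia.
  have zs : sigmaB n l n z = z by case: (cs z) => _ -> //; rewrite a1; lia.
  have z2 : cB n (fun j => (l <= j)%N && ~~ inI I j) z = z.
    by apply: cB2_fix; rewrite a1; lia.
  rewrite zs z2.
  have H1 : forall j, (0 < j < m)%N -> inI I j.
    move=> j hj; apply: NNPP => hj'.
    have : (m <= j)%N by apply: mmin; rewrite (_ : (0 < j)%N = true) /=; [apply/negP | lia].
    lia.
  have [c1 c2] := @c1_spec l I m z ltac:(lia) ln' H1 (fun _ => nm) ltac:(rewrite a1; lia).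
  split => //; first by rewrite c2.
  apply: (iff_trans _ (iff_sym cE)); split => //= -[h _]; exfalso; exact: hall h.
have hBc1 : forall y : pt, val y.1 = l.-1 ->
    val (cB n (fun j => inI I j && (j < l)%N) y).1 = 0 /\
    (cB n (fun j => inI I j && (j < l)%N) y).2 = y.2.
  move=> y hy; apply: (@c1_spec l I l y) => //; first by rewrite l0 leqnn.
  by rewrite ltnn.
have n0 : (0 < n)%N by lia.
case: (classic (exists j, (l <= j)%N /\ inI I j)) => hex; last first.
  exists (Ordinal n0, true).
  have [a1 a2] := @aB_spec l (Ordinal n0, true) (ltnW ln').
  move: a1 a2; rewrite /= l0 => a1 a2.
  rewrite aE; move: a1 a2; generalize (aB n l (Ordinal n0, true)) => z a1 a2.
  have {}a1 : val z.1 = l.-1 by rewrite /= a1; lia.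
  have u1 := hs z a1.
  have u2 : (sigmaB n l n z).2 = false by case: (cs z) => -> _.
  move: u1 u2; generalize (sigmaB n l n z) => u u1 u2.
  have [v1 v2] := @cB_chain (fun j => (l <= j)%N && ~~ inI I j) l (n - l) u l0 ltac:(lia)
    ltac:(move=> j hj /=; rewrite (_ : (l <= j)%N = false) //; lia)
    ltac:(move=> j hj /=; rewrite (_ : (l <= j)%N = true) /=; [apply/negP => hj'; apply: hex; exists j; split => //; lia | lia])
    ltac:(move=> h; lia)
    ltac:(rewrite u1; congr (_.-1); lia).
  have [w1 w2] := hBc1 _ v1.
  split => //; first by rewrite w2 v2.
  apply: (iff_trans _ (iff_sym cE)); split => //= -[_ h]; exfalso; exact: hex h.
have hexm : exists j, (l <= j)%N && inI I j by case: hex => j [h1 h2]; exists j; rewrite h1 h2.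
case: (ex_minnP hexm) => m /andP [lm im] mmin.
have mn : (m < n)%N by have := inI_lt Ip im; lia.
have m1n : (m.-1 < n)%N by lia.
have [y hy] := sperm_surj (Ordinal m1n, false) ss.
have y2 : y.2 = false by case: (cs y) => <- _; rewrite hy.
have yl : (l <= val y.1)%N.
  case: (ltnP (val y.1) l.-1) => h1.
    case: (cs y) => _ /(_ h1) e; move: hy; rewrite e => /(congr1 (fun p : pt => val p.1)) /= e'.
    have e2 : (val y.1 = m.-1)%N := e'. move: h1; rewrite e2; lia.
  case: (eqVneq (val y.1) l.-1) => h2.
    have := hs y h2; rewrite hy /=; lia.
  lia.
exists y.
have ay : aB n l y = y.
  have [a1 a2] := @aB_spec l y (ltnW ln').
  move: a1 a2; rewrite (_ : (val y.1 < l)%N = false); last lia.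
  by move=> a1 a2; apply: pt_eq.
rewrite aE ay hy.
have hJ2 : forall j, (l <= j < l + (m - l))%N -> (fun j => (l <= j)%N && ~~ inI I j) j.
  move=> j hj /=; apply/andP; split; first lia.
  apply/negP => hj'.
  have hmj : (m <= j)%N by apply: mmin; rewrite hj' andbT; lia.
  lia.
have hJ1 : forall j, (0 < j < l)%N -> ~~ (fun j => (l <= j)%N && ~~ inI I j) j.
  move=> j hj /=; rewrite (_ : (l <= j)%N = false) //; lia.
have hJ3 : (l + (m - l) < n)%N -> ~~ (fun j => (l <= j)%N && ~~ inI I j) (l + (m - l)).
  by move=> h /=; rewrite subnKC // lm im.
have hv : val (Ordinal m1n, false).1 = (l + (m - l)).-1 by rewrite /= subnKC.
have [v1 v2] := @cB_chain (fun j => (l <= j)%N && ~~ inI I j) l (m - l) (Ordinal m1n, false) l0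
  ltac:(lia) hJ1 hJ2 hJ3 hv.
have [w1 w2] := hBc1 _ v1.
split => //; first by rewrite w2 v2.
apply: (iff_trans _ (iff_sym cE)); split => // _; split => //.
Qed.



Lemma sperm_cB (J : pred nat) : sperm (cB n J).
Proof.
apply: sperm_prod => g /mapP [j]; rewrite mem_filter mem_iota => /andP [_ hj] ->.
apply: sperm_sB; lia.
Qed.

Lemma sperm_rB k : (k <= n)%N -> sperm (rB n k).
Proof.
elim: k => [|k IH] hk; first exact: sperm_one.
case: k IH hk => [|k] IH hk; first exact: sperm_tB.
apply: sperm_mul; [apply: sperm_sB; lia | apply: IH; lia].
Qed.

Lemma sperm_aB l : (l <= n)%N -> sperm (aB n l).
Proof.
move=> ln; apply: sperm_prod => g /mapP [k]; rewrite mem_iota => hk ->.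
apply: sperm_rB; lia.
Qed.

End Aux.

Theorem lemma3p2 (n l : nat) (I : {set 'I_n}) :
  1 <= l <= n.-1 ->
  (forall i : 'I_n, i \in I -> 0 < val i) ->
  (lenB (mulB (tB n) (alphaB l I)) > lenB (alphaB l I) <->
   [set i : 'I_n | 0 < val i < l] \proper I).
Proof.
move=> /andP [l0 ln] Ip.
have [x [h0 h2 hiff]] := alpha_key l0 ln Ip.
have [ss _ _] := sigma_spec l0 ln.
have sa : sperm (alphaB l I).
  rewrite alpha_eq; apply: sperm_mul; first exact: sperm_cB.
  apply: sperm_mul; first exact: sperm_cB.
  apply: sperm_mul => //; apply: sperm_aB; lia.
have st : sperm (mulB (tB n) (alphaB l I)) by apply: sperm_mul => //; exact: sperm_tB.
have [t1 t2] := L_tB (x := x) sa h0 h2.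
have g1 := lenB_ge (alphaB l I).
have g2 := lenB_ge (mulB (tB n) (alphaB l I)).
have e1 := lenB_le sa.
have e2 := lenB_le st.
apply: (iff_trans _ hiff).
case: (x.2) t1 t2 => t1 t2.
- have := t2 erefl; split => // h; lia.
- have := t1 erefl; split => // h; lia.
Qed.
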